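(* For every prime $p$ and $n\geq1$, the pseudovariety $\llbracket\mathbb{Z}_{p^n}\rrbracket$ is join irreducible and \[\operatorname{Excl}(\mathbb{Z}_{p^n})=\llbracket(x^{(p')^\omega})^{p^{n-1}}\approx x^\omega\rrbracket.\]
   Context: $\mathbb{Z}_m$ is the cyclic group of order $m$. A pseudovariety is a class of finite semigroups closed under finite direct products, subsemigroups and homomorphic images; $\llbracket S\rrbracket$ is the pseudovariety generated by $S$, and $\llbracket\Sigma\rrbracket$ the pseudovariety defined by pseudoidentities $\Sigma$. A pseudovariety $\mathbf{V}$ is join irreducible if for every set $\mathscr{X}$ of pseudovarieties, $\mathbf{V}\subseteq\bigvee\mathscr{X}$ implies $\mathbf{V}\subseteq\mathbf{X}$ for some $\mathbf{X}\in\mathscr{X}$; $\operatorname{Excl}(S)$ is the class of finite semigroups $T$ with $S\notin\llbracket T\rrbracket$. $x^\omega$ is the idempotent power. $p'$ denotes the set of all primes other than $p$; for a set $\pi=\{p_1,p_2,\dots\}$ of primes, $x^{\pi^\omega}$ is the limit in the free profinite semigroup on $\{x\}$ of $x^{(p_1\cdots p_k)^{k!}}$; for an element $s$ of a finite semigroup, $s^{\pi^\omega}$ generates the $\pi'$-primary component of the cyclic group generated by $s^{\omega+1}$ (so $s^{(p')^\omega}$ generates its $p$-primary component). *)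

(* Defs.v *)
From mathcomp Require Import all_boot all_algebra.
Set Implicit Arguments. Unset Strict Implicit. Unset Printing Implicit Defensive.

Record finSemigroup := FinSemigroup {
  sg_carrier :> finType;
  sg_op : sg_carrier -> sg_carrier -> sg_carrier;
  sg_opA : associative sg_op }.

Definition sgclass := finSemigroup -> Prop.

Definition sg_hom (S T : finSemigroup) (f : S -> T) : Prop :=
  forall x y, f (sg_op x y) = sg_op (f x) (f y).

Definition prod_op (S T : finSemigroup) (x y : (S * T)%type) : (S * T)%type :=
  (sg_op x.1 y.1, sg_op x.2 y.2).
Lemma prod_opA (S T : finSemigroup) : associative (@prod_op S T).
Proof. by move=> [a b] [c d] [e f]; rewrite /prod_op /= !sg_opA. Qed.
Definition sg_prod (S T : finSemigroup) : finSemigroup :=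
  FinSemigroup (@prod_opA S T).

Lemma unit_opA : associative (fun _ _ : unit => tt). Proof. by []. Qed.
Definition sg_unit : finSemigroup := FinSemigroup unit_opA.

(* pseudovariety: closed under finite direct products (the empty product,
   i.e. the trivial semigroup, and binary products), subsemigroups (up to
   isomorphism: domains of injective homomorphisms) and homomorphic images *)
Definition pseudovariety (V : sgclass) : Prop :=
  [/\ V sg_unit,
      (forall S T : finSemigroup, V S -> V T -> V (sg_prod S T)),
      (forall (S T : finSemigroup) (f : T -> S), sg_hom f -> injective f -> V S -> V T) &
      (forall (S T : finSemigroup) (f : S -> T), sg_hom f -> (forall y, exists x, f x = y) -> V S -> V T)].

Definition subclass (V W : sgclass) : Prop := forall S, V S -> W S.

Definition gen_pv (S : finSemigroup) : sgclass :=
  fun T => forall V, pseudovariety V -> V S -> V T.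

Definition pv_join (X : sgclass -> Prop) : sgclass :=
  fun T => forall V, pseudovariety V ->
    (forall W, X W -> subclass W V) -> V T.

Definition join_irreducible (V : sgclass) : Prop :=
  forall X : sgclass -> Prop, (forall W, X W -> pseudovariety W) ->
    subclass V (pv_join X) -> exists2 W, X W & subclass V W.

Definition Excl (S : finSemigroup) : sgclass := fun T => ~ gen_pv T S.

(* s ^ k for k >= 1 (spow s 0 = s, never used) *)
Definition spow (S : finSemigroup) (s : S) (k : nat) : S :=
  iter k.-1 (sg_op s) s.

Definition is_omega (S : finSemigroup) (s e : S) : Prop :=
  sg_op e e = e /\ exists2 k, 0 < k & e = spow s k.

Lemma next_pprime_ex (p m : nat) : exists q, [&& prime q, q != p & m < q].
Proof.
case: (prime_above (maxn m p)) => q; rewrite gtn_max => /andP[mq pq] prq.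
by exists q; rewrite prq mq andbT (gtn_eqF pq).
Qed.

Definition next_pprime (p m : nat) : nat := ex_minn (next_pprime_ex p m).

(* pprime p i = p_{i+1}, the (i+1)-th element of p' in increasing order *)
Fixpoint pprime (p i : nat) : nat :=
  match i with
  | 0 => next_pprime p 0
  | i'.+1 => next_pprime p (pprime p i')
  end.

(* (p_1 ... p_k)^(k!), whose limit defines x^{(p')^omega} *)
Definition pprime_exp (p k : nat) : nat :=
  (\prod_(i < k) pprime p i) ^ k`!.

(* In a finite (discrete) semigroup a sequence converges to t iff it is
   eventually equal to t. *)
Definition eventually_eq (S : finSemigroup) (u : nat -> S) (t : S) : Prop :=
  exists K, forall k, K <= k -> u k = t.

(* T satisfies (x^{(p')^omega})^{p^(n-1)} = x^omega: for every s, the value of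
   the left side at s, i.e. lim_k (s^{(p_1...p_k)^{k!}})^{p^(n-1)}
   = lim_k s^{(p_1...p_k)^{k!} * p^(n-1)}, equals s^omega. *)
Definition sat_Zpn_identity (p n : nat) (T : finSemigroup) : Prop :=
  forall (s e : T), is_omega s e ->
    eventually_eq (fun k => spow s (pprime_exp p k * p ^ n.-1)) e.

(* the cyclic group Z_m (m >= 2) as a finite semigroup *)
Definition sg_Z (m : nat) : finSemigroup :=
  FinSemigroup (@GRing.addrA 'Z_m).

(* Main.v *)
Require Import Defs.
From mathcomp Require Import all_boot all_algebra.
From mathcomp Require Import zify.
From Stdlib Require Import Classical.
Import GRing.Theory.
Set Implicit Arguments. Unset Strict Implicit. Unset Printing Implicit Defensive.

Definition pw (T : finSemigroup) (s : T) (k : nat) : T := iter k (sg_op s) s.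

Lemma pwS (T : finSemigroup) (s : T) k : pw s k.+1 = sg_op s (pw s k).
Proof. by []. Qed.

Lemma pwD (T : finSemigroup) (s : T) a b :
  pw s (a + b).+1 = sg_op (pw s a) (pw s b).
Proof.
elim: a => [|a IH]; first by rewrite add0n.
by rewrite addSn pwS IH sg_opA.
Qed.

Lemma pw_shift (T : finSemigroup) (s : T) u v c :
  pw s u = pw s v -> pw s (u + c) = pw s (v + c).
Proof.
case: c => [|c] H; first by rewrite !addn0.
by rewrite !addnS !pwD H.
Qed.

Lemma pw_hom (S T : finSemigroup) (f : S -> T) (s : S) k :
  sg_hom f -> f (pw s k) = pw (f s) k.
Proof. move=> hf; elim: k => [|k IH] //; by rewrite !pwS hf IH. Qed.

Lemma pw_prod (S T : finSemigroup) (x : S) (y : T) k :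
  @pw (sg_prod S T) (x, y) k = (pw x k, pw y k).
Proof. elim: k => [|k IH] //; by rewrite pwS IH. Qed.

Lemma pwM (T : finSemigroup) (s : T) a b :
  pw (pw s a) b = pw s (a.+1 * b.+1).-1.
Proof.
elim: b => [|b IH]; first by rewrite muln1.
rewrite pwS IH -pwD; congr pw; nia.
Qed.

Lemma pw_idem (T : finSemigroup) (e : T) k : sg_op e e = e -> pw e k = e.
Proof. move=> He; elim: k => [|k IH] //; by rewrite pwS IH He. Qed.

Lemma idem_uniq (T : finSemigroup) (s : T) a b :
  sg_op (pw s a) (pw s a) = pw s a -> sg_op (pw s b) (pw s b) = pw s b ->
  pw s a = pw s b.
Proof.
move=> Ha Hb.
rewrite -(pw_idem b Ha) -(pw_idem a Hb) !pwM mulnC //.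
Qed.

Lemma spow_pw (T : finSemigroup) (s : T) k : spow s k = pw s k.-1.
Proof. by []. Qed.

Section Period.
Variable T : finSemigroup.
Variable s : T.
Local Notation i0 := #|T|.

Lemma pw_rep : exists x y, x < y <= i0 /\ pw s x = pw s y.
Proof.
pose f := fun i : 'I_i0.+1 => pw s i.
have Hni : ~ injective f.
  by move=> /leq_card; rewrite card_ord ltnn.
apply: NNPP => H; apply: Hni => x y Hxy; apply: NNPP => Hne; apply: H.
case: (ltngtP x y) => [lt|lt|eq]; last by case: Hne; apply: val_inj.
- by exists x, y; split => //; rewrite lt /= -ltnS ltn_ord.
- by exists y, x; split => //; rewrite lt /= -ltnS ltn_ord.
Qed.

Definition Pper d := (0 < d) && (pw s (i0 + d) == pw s i0).

Lemma Pper_ex : exists d, Pper d.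
Proof.
case: pw_rep => x [y [/andP[xy yi] H]].
exists (y - x); rewrite /Pper subn_gt0 xy /=; apply/eqP.
have := pw_shift (i0 - x) (esym H).
have -> : y + (i0 - x) = i0 + (y - x) by lia.
by have -> : x + (i0 - x) = i0 by lia.
Qed.

Definition per := ex_minn Pper_ex.

Lemma per_gt0 : 0 < per.
Proof. by rewrite /per; case: ex_minnP => m /andP[]. Qed.

Lemma per_eq0 : pw s (i0 + per) = pw s i0.
Proof. by rewrite /per; case: ex_minnP => m /andP[_ /eqP]. Qed.

Lemma per_min d : 0 < d -> pw s (i0 + d) = pw s i0 -> per <= d.
Proof. move=> d0 H; rewrite /per; case: ex_minnP => m _; apply; by rewrite /Pper d0 H eqxx. Qed.

Lemma per_step z : i0 <= z -> pw s (z + per) = pw s z.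
Proof.
move=> Hz; have := pw_shift (z - i0) per_eq0.
have -> : i0 + per + (z - i0) = z + per by lia.
by have -> : i0 + (z - i0) = z by lia.
Qed.

Lemma per_mul x j : i0 <= x -> pw s (x + j * per) = pw s x.
Proof.
move=> Hx; elim: j => [|j IH]; first by rewrite addn0.
rewrite mulSn (addnC per) addnA per_step ?IH //; lia.
Qed.

Lemma per_eqP x y : i0 <= x -> i0 <= y -> (pw s x = pw s y <-> x = y %[mod per]).
Proof.
wlog le_xy : x y / x <= y.
  move=> W Hx Hy; case/orP: (leq_total x y) => H; first exact: W.
  by split => [E|E]; [apply/esym; apply W => // | apply/esym; apply W => //].
move=> Hx Hy; split => [E|E].
- apply/eqP; rewrite eq_sym eqn_mod_dvd //.
  set d := y - x.
  have Hr : pw s (x + d %% per) = pw s x.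
    rewrite -(per_mul (d %/ per)); last lia.
    rewrite E; congr pw; have := divn_eq d per; rewrite /d; lia.
  rewrite /dvdn; apply/eqP.
  case: (posnP (d %% per)) => // r0.
  exfalso.
  have := pw_shift (per * (x - i0) - (x - i0)) Hr.
  have -> : x + (per * (x - i0) - (x - i0)) = i0 + (x - i0) * per.
    have := per_gt0; nia.
  have -> : x + d %% per + (per * (x - i0) - (x - i0)) = (i0 + d %% per) + (x - i0) * per.
    have := per_gt0; nia.
  rewrite !per_mul ?leq_addr // => H.
  have := per_min r0 H; rewrite leqNgt ltn_mod per_gt0 //.
- have : per %| y - x by rewrite -eqn_mod_dvd // eq_sym; apply/eqP.
  move/dvdnP => [q Hq].
  have -> : y = x + q * per by lia.
  by rewrite per_mul.
Qed.

Definition Cp := per * i0.+1.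

Lemma Cp_ge : i0 <= Cp.-1.
Proof. have := per_gt0; rewrite /Cp; nia. Qed.

Lemma idem_ex : sg_op (pw s Cp.-1) (pw s Cp.-1) = pw s Cp.-1.
Proof.
rewrite -pwD; apply/per_eqP; [|exact: Cp_ge|].
- have := Cp_ge; lia.
- have H0 : 0 < Cp by have := per_gt0; rewrite /Cp; nia.
  have -> : (Cp.-1 + Cp.-1).+1 = i0.+1 * per + Cp.-1 by rewrite /Cp in H0 *; nia.
  by rewrite modnMDl.
Qed.

End Period.

Lemma next_pprimeP p m :
  [/\ prime (next_pprime p m), next_pprime p m != p, m < next_pprime p m &
   forall q, prime q -> q != p -> m < q -> next_pprime p m <= q].
Proof.
rewrite /next_pprime; case: ex_minnP => q /and3P[H1 H2 H3] Hmin.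
split => // r H4 H5 H6; apply: (Hmin r); by rewrite H4 H5 H6.
Qed.

Lemma pprime_prime p i : prime (pprime p i) /\ pprime p i != p.
Proof. by case: i => [|i]; [case: (next_pprimeP p 0) | case: (next_pprimeP p (pprime p i))]. Qed.

Lemma pprime_gt p i : i < pprime p i.
Proof.
elim: i => [|i IH] /=; first by case: (next_pprimeP p 0).
case: (next_pprimeP p (pprime p i)) => _ _ H _; exact: leq_ltn_trans H.
Qed.

Lemma pprime_all p j q : prime q -> q != p -> q <= pprime p j ->
  exists2 i, i <= j & pprime p i = q.
Proof.
move=> Pq qp; elim: j => [|j IH] /= Hq.
  exists 0 => //; apply/eqP; rewrite eqn_leq Hq andbT.
  by case: (next_pprimeP p 0) => _ _ _; apply => //; exact: prime_gt0.
case: (leqP q (pprime p j)) => H.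
  by case: (IH H) => i Hi Ei; exists i => //; exact: leqW.
exists j.+1 => //; apply/eqP; rewrite eqn_leq Hq andbT.
by case: (next_pprimeP p (pprime p j)) => _ _ _; apply.
Qed.

Lemma pprime_exp_coprime p k : prime p -> coprime p (pprime_exp p k).
Proof.
move=> Pp; rewrite /pprime_exp coprimeXr //.
elim/big_ind: _ => [|a b|]; first by rewrite coprimen1.
  by rewrite coprimeMr => -> ->.
move=> i _; case: (pprime_prime p i) => Pq qp.
by rewrite prime_coprime // dvdn_prime2 // eq_sym.
Qed.

Lemma pprime_exp_ge p k : k < pprime_exp p k.
Proof.
rewrite /pprime_exp.
have H : 2 ^ k <= \prod_(i < k) pprime p i.
  elim: k => [|k IH]; first by rewrite big_ord0.
  rewrite big_ord_recr /= expnSr leq_mul //.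
  by case: (pprime_prime p k) => /prime_gt1.
have H1 := ltn_expl k (isT : 1 < 2).
have P0 : 0 < \prod_(i < k) pprime p i by lia.
apply: leq_trans (leq_trans H1 H) _.
by rewrite -{1}(expn1 (\prod_(i < k) pprime p i)) leq_pexp2l // fact_gt0.
Qed.

Lemma iter_add1 M N : iter N (fun y : 'Z_M => (1 + y)%R) 1%R = (N.+1)%:R%R.
Proof. elim: N => [|N IH] /=; first by rewrite mulr1n. by rewrite IH [in RHS]mulrS. Qed.

Lemma spow_Z M N : 1 < M -> 0 < N ->
  val (@spow (sg_Z M) (1%R : 'Z_M) N : 'Z_M) = N %% M.
Proof.
move=> M1; case: N => // N _.
rewrite spow_pw /pw /=.
change (val (iter N (fun y : 'Z_M => (1 + y)%R) 1%R) = N.+1 %% M).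
by rewrite iter_add1; exact: val_Zp_nat.
Qed.

Lemma Z_not_sat p n : prime p -> 0 < n -> ~ sat_Zpn_identity p n (sg_Z (p ^ n)).
Proof.
move=> Pp n0 H.
have p1 := prime_gt1 Pp.
have M1 : 1 < p ^ n by rewrite -{1}(expn0 p) ltn_exp2l.
have [K HK] : eventually_eq (fun k => @spow (sg_Z (p^n)) (1%R : 'Z_(p^n)) (pprime_exp p k * p ^ n.-1)) (0%R : 'Z_(p^n)).
  apply: H; split; first by rewrite /= addr0.
  exists (p ^ n); first lia.
  by apply: val_inj; rewrite spow_Z ?modnn //; lia.
have := HK K (leqnn K).
have P0 : 0 < pprime_exp p K * p ^ n.-1.
  by rewrite muln_gt0 expn_gt0 (ltnW p1) andbT; have := pprime_exp_ge p K; lia.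
move/(congr1 val); rewrite spow_Z // => /eqP.
rewrite -/(dvdn _ _) Gauss_dvdr; last by rewrite coprime_sym coprimeXr // coprime_sym pprime_exp_coprime.
have Pn : 0 < p ^ n.-1 by rewrite expn_gt0 (ltnW p1).
move/(dvdn_leq Pn).
by rewrite leq_exp2l //; lia.
Qed.

Lemma sat_pv p n : pseudovariety (sat_Zpn_identity p n).
Proof.
split.
- move=> s e _; exists 0 => k _; by case: (spow _ _); case: e.
- move=> S T HS HT [s1 s2] [e1 e2] [Hid [k k0 Hk]].
  case: Hid => Hid1 Hid2.
  move: Hk; rewrite spow_pw pw_prod => -[Hk1 Hk2].
  have [K1 H1] := HS s1 e1 (conj Hid1 (ex_intro2 _ _ k k0 Hk1)).
  have [K2 H2] := HT s2 e2 (conj Hid2 (ex_intro2 _ _ k k0 Hk2)).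
  exists (maxn K1 K2) => k'; rewrite geq_max => /andP[k1 k2].
  by rewrite spow_pw pw_prod -!spow_pw H1 ?H2.
- move=> S T f hf finj HS s e [Hid [k k0 Hk]].
  have [K HK] : eventually_eq (fun k => spow (f s) (pprime_exp p k * p ^ n.-1)) (f e).
    apply: HS; split; first by rewrite -hf Hid.
    by exists k => //; rewrite Hk !spow_pw pw_hom.
  exists K => k' /HK; rewrite !spow_pw -pw_hom //; exact: finj.
- move=> S T f hf fsurj HS t e [Hid [k k0 Hk]].
  have [x Hx] := fsurj t.
  have C0 : 0 < Cp x by rewrite /Cp muln_gt0 per_gt0.
  have [K HK] : eventually_eq (fun k => spow x (pprime_exp p k * p ^ n.-1)) (pw x (Cp x).-1).
    apply: HS; split; first exact: idem_ex.
    by exists (Cp x).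
  exists K => k' /HK; rewrite !spow_pw -Hx -pw_hom // => ->.
  rewrite Hk spow_pw pw_hom // Hx; apply: idem_uniq.
  + by rewrite -Hx -!pw_hom // -hf idem_ex.
  + by rewrite -spow_pw -Hk.
Qed.

Lemma Zp_lt M (a : 'Z_M) : 1 < M -> val a < M.
Proof. move=> M1; change (nat_of_ord a < M); have := ltn_ord a; move: (nat_of_ord a) => x; by rewrite Zp_cast. Qed.

Lemma notsat_gen p n (T : finSemigroup) : prime p -> 0 < n ->
  ~ sat_Zpn_identity p n T -> gen_pv T (sg_Z (p ^ n)).
Proof.
move=> Pp n0 NS.
have p1 := prime_gt1 Pp.
have M1 : 1 < p ^ n by rewrite -{1}(expn0 p) ltn_exp2l.
have [s [e [Hom NE]]] : exists (s e : T), is_omega s e /\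
    ~ eventually_eq (fun k => spow s (pprime_exp p k * p ^ n.-1)) e.
  apply: NNPP => H; apply: NS => s e Ho; apply: NNPP => Hne; apply: H.
  by exists s, e.
have m0 := per_gt0 s.
have Ci := Cp_ge s.
have C0 : 0 < Cp s by rewrite /Cp muln_gt0 m0.
have HC : Cp s = per s * #|T|.+1 by [].
case: (boolP (p ^ n %| per s)) => Hdiv.
-
  move=> V [_ _ Hinj _] VT.
  set M := p ^ n in Hdiv M1 *.
  set m := per s in Hdiv m0 HC.
  set r := m %/ M.
  have Em : m = M * r by rewrite /r mulnC divnK.
  have r0 : 0 < r by move: m0; rewrite Em muln_gt0 => /andP[].
  set D := (Cp s).-1 in Ci.
  have HD : D.+1 = m * #|T|.+1 by rewrite /D prednK.
  apply: (Hinj T (sg_Z M) (fun j : 'Z_M => pw s (val j * r + D))) => //.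
  + move=> a b /=.
    change (pw s (((val a + val b) %% (Zp_trunc M).+2) * r + D) =
            sg_op (pw s (val a * r + D)) (pw s (val b * r + D))).
    rewrite (_ : (val a + val b) %% (Zp_trunc M).+2 = (val a + val b) %% M);
      last by move: (val a + val b) => x; rewrite Zp_cast.
    rewrite -pwD; apply/per_eqP; [lia|lia|].
    rewrite -/m muln_modl -Em modnDml.
    have -> : (val a * r + D + (val b * r + D)).+1 = #|T|.+1 * m + ((val a + val b) * r + D).
      rewrite mulnDl; have : #|T|.+1 * m = D.+1 by rewrite HD mulnC.
      lia.
    by rewrite modnMDl.
  + move=> a b E.
    have := (per_eqP s (leq_trans Ci (leq_addl _ _)) (leq_trans Ci (leq_addl _ _))).1 E.
    move/eqP; rewrite eqn_modDr -/m Em -!muln_modl => /eqP H.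
    apply: val_inj; move: H => /eqP; rewrite eqn_pmul2r // !modn_small //.
    * by move/eqP.
    * exact: Zp_lt.
    * exact: Zp_lt.
- exfalso; apply: NE.
  exists (per s + #|T|.+1) => k Hk.
  set N := pprime_exp p k * p ^ n.-1.
  have kN : k < N.
    have := pprime_exp_ge p k; rewrite /N => H.
    apply: leq_trans H _; apply: leq_pmulr; by rewrite expn_gt0 (ltnW p1).
  have mN : per s %| N.
    apply/dvdn_partP => // q; rewrite mem_primes => /and3P[Pq _ qm].
    rewrite p_part.
    case: (eqVneq q p) => [->|qp].
    + apply: dvdn_mull; apply: dvdn_exp2l.
      rewrite leqNgt; apply/negP => H; move/negP: Hdiv; apply.
      have : p ^ logn p (per s) %| per s by rewrite -p_part dvdn_part.
      apply: dvdn_trans; apply: dvdn_exp2l; lia.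
    + have qle : q <= per s := dvdn_leq m0 qm.
      have [i iq Ei] := pprime_all Pq qp (ltnW (pprime_gt p q)).
      have ik : i < k by lia.
      apply: dvdn_mulr; apply: dvdn_trans (dvdn_exp2l q _) (dvdn_exp2r _ _).
      * have H1 := ltn_expl (logn q (per s)) (prime_gt1 Pq).
        have H2 : q ^ logn q (per s) <= per s by rewrite -p_part dvdn_leq // dvdn_part.
        have H3 := fact_geq k.
        lia.
      * rewrite (bigD1 (Ordinal ik)) //= Ei; exact: dvdn_mulr.
  have N0 : 0 < N by lia.
  have -> : e = pw s (Cp s).-1.
    case: Hom => Hid [k0 k00 Hk0].
    rewrite Hk0 spow_pw; apply: idem_uniq; first by rewrite -spow_pw -Hk0.
    exact: idem_ex.
  rewrite spow_pw; apply/per_eqP; [lia|lia|].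
  apply/eqP; rewrite -(eqn_modDr 1) !addn1 !prednK //.
  by move: mN; rewrite /dvdn HC modnMr => /eqP ->.
Qed.

Theorem theorem5p3 (p n : nat) : prime p -> 0 < n ->
  join_irreducible (gen_pv (sg_Z (p ^ n))) /\
  (forall T : finSemigroup, Excl (sg_Z (p ^ n)) T <-> sat_Zpn_identity p n T).
Proof.
move=> Pp n0.
have Hsat : forall T : finSemigroup, Excl (sg_Z (p ^ n)) T <-> sat_Zpn_identity p n T.
  move=> T; split => [HE|HS HG].
  - apply: NNPP => NS; apply: HE; exact: notsat_gen.
  - apply: (Z_not_sat Pp n0); exact: (HG _ (sat_pv p n) HS).
split => //.
move=> X HX Hsub.
case: (classic (exists2 W, X W & W (sg_Z (p ^ n)))) => [[W XW WZ]|NW].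
  exists W => // T HT; exact: (HT W (HX W XW) WZ).
exfalso; apply: (Z_not_sat Pp n0).
apply: (Hsub (sg_Z (p ^ n)) (fun V _ H => H)) => //; first exact: sat_pv.
move=> W XW T WT; apply/Hsat => HG; apply: NW; exists W => //.
exact: (HG W (HX W XW) WT).
Qed.
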